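(* Let $(A,v)$ and $(B,w)$ be valued abelian groups and let $f:A\to B$ be a group homomorphism. Assume there is a subset $S\subseteq A$ such that: (a) the assignment $vs\mapsto wf(s)$ for $s\in S$ defines an order preserving map $\varphi:v(S)\to w(B)$; that is, for $s,s'\in S$, $vs=vs'$ implies $wf(s)=wf(s')$, and $vs<vs'$ implies $wf(s)<wf(s')$; (b) for all $a\in A$ and $s\in S$: if $va\ge vs$ then $wf(a)\ge wf(s)$; (c) for every $b\in B\setminus\{0\}$ there is some $s\in S$ with $w(b-f(s))>wb$. Suppose further that $(A,v)$ is spherically complete. Then $f$ is surjective and $(B,w)$ is spherically complete.
   Context: A valued abelian group $(A,v)$ is an abelian group $A$ with a map $v:A\to \Gamma\cup\{\infty\}$, $a\mapsto va$, onto a totally ordered set with largest element $\infty$, such that $va=\infty\iff a=0$ and $v(a-a')\ge\min\{va,va'\}$ for all $a,a'\in A$. For $X\subseteq A$ write $v(X)=\{vx\mid x\in X\}$. For $a\in A$ and $\alpha\in v(A)$ the ball is $B_\alpha(a)=\{a'\in A\mid v(a-a')\ge\alpha\}$. A nest of balls is a set of balls totally ordered by inclusion; $(A,v)$ is spherically complete if every nest of balls has nonempty intersection. *)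

(* Defs.v *)
From HB Require Import structures.
From mathcomp Require Import all_boot all_order all_algebra.
Set Implicit Arguments. Unset Strict Implicit. Unset Printing Implicit Defensive.
Import Order.TTheory GRing.Theory.
Local Open Scope ring_scope.
Local Open Scope order_scope.

(* A valuation on an abelian group A with values in a totally ordered set G
   whose largest element \top plays the role of infinity. *)
Definition valuation (A : zmodType) (d : Order.disp_t) (G : tOrderType d)
  (v : A -> G) : Prop :=
  [/\ (forall g : G, exists a : A, v a = g),
      (forall a : A, v a = \top <-> a = 0%R) &
      (forall a a' : A, Order.min (v a) (v a') <= v (a - a')%R)].

Definition vball (A : zmodType) (d : Order.disp_t) (G : tOrderType d)
  (v : A -> G) (alpha : G) (a : A) : A -> Prop :=
  fun a' => alpha <= v (a - a')%R.

Definition is_ball (A : zmodType) (d : Order.disp_t) (G : tOrderType d)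
  (v : A -> G) (X : A -> Prop) : Prop :=
  exists (a : A) (alpha : G), (exists x : A, v x = alpha) /\ X = vball v alpha a.

Definition nest_of_balls (A : zmodType) (d : Order.disp_t) (G : tOrderType d)
  (v : A -> G) (N : (A -> Prop) -> Prop) : Prop :=
  (forall X, N X -> is_ball v X) /\
  (forall X Y, N X -> N Y -> (forall x, X x -> Y x) \/ (forall x, Y x -> X x)).

Definition spherically_complete (A : zmodType) (d : Order.disp_t)
  (G : tOrderType d) (v : A -> G) : Prop :=
  forall N : (A -> Prop) -> Prop, nest_of_balls v N ->
    exists a : A, forall X, N X -> X a.

(* Main.v *)
From HB Require Import structures.
From mathcomp Require Import all_boot all_order all_algebra.
Require Import Defs.
From mathcomp Require classical_sets.
From Stdlib Require Import Classical.
Import Order.TTheory GRing.Theory.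
Set Implicit Arguments.
Local Open Scope ring_scope.
Local Open Scope order_scope.

Lemma zorn_helper (T : Type) (P : (T -> Prop) -> Prop) :
 (forall F : (T -> Prop) -> Prop, (forall N, F N -> P N) ->
    (forall N1 N2, F N1 -> F N2 -> (forall x, N1 x -> N2 x) \/ (forall x, N2 x -> N1 x)) ->
    P (fun x => exists2 N, F N & N x)) ->
 exists N, P N /\ forall N', (forall x, N x -> N' x) -> P N' -> forall x, N' x -> N x.
Proof.
move=> H.
case: (@classical_sets.Zorn_bigcup T P).
  move=> F FP Ftot.
  exact: H.
move=> N [PN Nmax].
exists N; split => // N' NN' PN' x N'x.
apply: NNPP => Nx.
apply: (Nmax N') => //; split => //.
by move=> h; apply: Nx; apply: h.
Qed.

Lemma val_top (A : zmodType) d (G : tOrderType d) (v : A -> G) :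
  valuation v -> v 0%R = \top.
Proof. by case=> _ h _; apply/h. Qed.

Lemma valN (A : zmodType) d (G : tOrderType d) (v : A -> G) :
  valuation v -> forall a, v (- a)%R = v a.
Proof.
move=> hv; have h0 := val_top hv; case: hv => _ _ hu.
have H : forall a, v a <= v (- a)%R.
  move=> a; have := hu 0%R a; rewrite h0 sub0r.
  by have -> : Order.min \top (v a) = v a by apply/min_idPr; exact: lex1.
move=> a; apply/le_anti; rewrite H andbT.
by have := H (- a)%R; rewrite opprK => ->.
Qed.

Lemma valsym (A : zmodType) d (G : tOrderType d) (v : A -> G) :
  valuation v -> forall a b, v (a - b)%R = v (b - a)%R.
Proof. by move=> hv a b; rewrite -(valN hv) opprB. Qed.

Lemma valtr (A : zmodType) d (G : tOrderType d) (v : A -> G) :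
  valuation v -> forall al a b c, al <= v (a - b)%R -> al <= v (b - c)%R ->
  al <= v (a - c)%R.
Proof.
move=> hv al a b c h1 h2; case: (hv) => _ _ hu.
have := hu (a - b)%R (c - b)%R.
have -> : ((a - b) - (c - b) = a - c)%R.
  by rewrite opprB addrA subrK.
apply: le_trans; rewrite le_min h1 /=.
by rewrite (valsym hv c).
Qed.

Lemma valeq (A : zmodType) d (G : tOrderType d) (v : A -> G) :
  valuation v -> forall x y, v x < v (x - y)%R -> v y = v x.
Proof.
move=> hv x y h; case: (hv) => _ _ hu.
have e1 : v x <= v y.
  have := hu x (x - y)%R; rewrite subKr.
  by have -> : Order.min (v x) (v (x - y)%R) = v x by apply/min_idPl; exact: ltW.
apply/le_anti; rewrite e1 andbT leNgt; apply/negP => lt.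
have := hu (x - y)%R (- y)%R; rewrite opprK subrK.
have -> : v (- y)%R = v y by exact: valN.
rewrite ge_min => /orP[m|m].
- by have := lt_le_trans h m; rewrite ltxx.
- by have := lt_le_trans lt m; rewrite ltxx.
Qed.

Lemma key_lemma (A B : zmodType) (d1 d2 : Order.disp_t)
  (G1 : tOrderType d1) (G2 : tOrderType d2)
  (v : A -> G1) (w : B -> G2) (f : {additive A -> B}) (S : A -> Prop) :
  valuation v -> valuation w ->
  (forall s s' : A, S s -> S s' -> v s = v s' -> w (f s) = w (f s')) ->
  (forall s s' : A, S s -> S s' -> v s < v s' -> w (f s) < w (f s')) ->
  (forall a s : A, S s -> v s <= v a -> w (f s) <= w (f a)) ->
  (forall b : B, b != 0%R -> exists s : A, S s /\ w b < w (b - f s)%R) ->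
  spherically_complete v ->
  forall M, nest_of_balls w M -> exists a, forall Y, M Y -> Y (f a).
Proof.
move=> hv hw ha1 ha2 hb hc hsc M [Mb Mn].
have w0 := val_top hw.
have wtop : forall b, w b = \top -> b = 0%R.
  by case: (hw) => _ h _ b /h.
have phi_le : forall s t, S s -> S t -> w (f t) <= w (f s) -> v t <= v s.
  move=> s t Ss St h; case: (leP (v t) (v s)) => // lt_st.
  by move: (ha2 _ _ Ss St lt_st); rewrite ltNge h.
have phi_lt : forall s t, S s -> S t -> w (f s) < w (f t) -> v s < v t.
  move=> s t Ss St h; case: (leP (v t) (v s)) => // le_ts.
  move: le_ts; rewrite le_eqVlt => /orP[/eqP e|lt].
  - by move: h; rewrite (ha1 _ _ St Ss e) ltxx.
  - by move: (ha2 _ _ St Ss lt); rewrite ltNge (ltW h).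
pose good := fun s x => S s /\ forall Y, M Y -> exists2 y, Y y & w (f s) <= w (y - f x)%R.
pose gball := fun X => exists s x, good s x /\ X = vball v (v s) x.
pose P := fun N : (A -> Prop) -> Prop => (forall X, N X -> gball X) /\
  (forall X Y, N X -> N Y -> (forall x, X x -> Y x) \/ (forall x, Y x -> X x)).
have [N [[Ng Nn] Nmax]] : exists N, P N /\ forall N', (forall x, N x -> N' x) -> P N' -> forall x, N' x -> N x.
  apply: zorn_helper => F FP Fch; split.
  - move=> X [N FN NX]; exact: (FP N FN).1 X NX.
  - move=> X Y [N1 F1 X1] [N2 F2 Y2]; case: (Fch _ _ F1 F2) => h.
    + exact: (FP N2 F2).2 X Y (h _ X1) Y2.
    + exact: (FP N1 F1).2 X Y X1 (h _ Y2).
have [a Ha] : exists a, forall X, N X -> X a.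
  apply: hsc; split => // X NX; have [s [x [_ ->]]] := Ng X NX.
  by exists x, (v s); split => //; exists s.
case: (classic (forall Y, M Y -> Y (f a))) => [h|]; first by exists a.
move=> /not_all_ex_not [Y0 hY0]; have [MY0 nY0] := imply_to_and _ _ hY0.
have [y0 [b0 [[e0 we0] Y0E]]] := Mb Y0 MY0.
have Y0y0 : Y0 y0 by rewrite Y0E /vball subrr w0; exact: lex1.
have lt_c : w (y0 - f a)%R < b0.
  rewrite ltNge; apply/negP => h; apply: nY0; rewrite Y0E; exact: h.
have c0 : (y0 - f a)%R != 0%R.
  by apply/eqP => c0; move: lt_c; rewrite c0 w0 ltNge lex1.
have [s [Ss hs]] := hc _ c0.
have wfs : w (f s) = w (y0 - f a)%R by exact: valeq hs.
have hd : (y0 - f (a + s))%R = ((y0 - f a) - f s)%R by rewrite raddfD opprD addrA.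
have lt_cd : w (y0 - f a)%R < w (y0 - f (a + s))%R by rewrite hd.
have key : forall s1, S s1 -> w (y0 - f a)%R < w (f s1) -> w (f s1) <= b0 ->
    w (f s1) <= w (y0 - f (a + s))%R -> False.
  move=> s1 Ss1 h1 h2 h3.
  pose X1 := vball v (v s1) (a + s)%R.
  have lt_ss1 : v s < v s1 by apply: phi_lt => //; rewrite wfs.
  have gX1 : gball X1.
    exists s1, (a + s)%R; split => //; split => // Y MY.
    case: (Mn Y Y0 MY MY0) => hY.
    - have [y [b [[e we] YE]]] := Mb Y MY.
      have Yy : Y y by rewrite YE /vball subrr w0; exact: lex1.
      exists y => //.
      apply: (valtr hw _ y y0); last by [].
      have := hY y Yy; rewrite Y0E /vball => hy.
      by rewrite (valsym hw); exact: le_trans h2 hy.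
    - by exists y0; [exact: hY | exact: h3].
  have X1sub : forall Y, N Y -> forall x, X1 x -> Y x.
    move=> Y NY x X1x.
    have [t [x' [[St gt] YE]]] := Ng Y NY.
    have Ya := Ha Y NY; rewrite YE /vball in Ya.
    have [y Y0y hy] := gt Y0 MY0.
    have hy' : w (f t) <= w (y - f a)%R.
      apply: (valtr hw _ y (f x')) => //; rewrite -raddfB; exact: hb.
    have hyc : w (y - f a)%R <= w (y0 - f a)%R.
      rewrite leNgt; apply/negP => lt.
      have hy0 : b0 <= w (y0 - y)%R by move: Y0y; rewrite Y0E.
      have m : Order.min (w (y0 - y)%R) (w (y - f a)%R) <= w (y0 - f a)%R.
        by apply: (valtr hw _ y0 y (f a)); [rewrite ge_min lexx | rewrite ge_min lexx orbT].
      move: m; rewrite ge_min => /orP [m|m].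
      - by have := lt_le_trans lt_c (le_trans hy0 m); rewrite ltxx.
      - by have := lt_le_trans lt m; rewrite ltxx.
    have vts : v t <= v s by apply: phi_le => //; rewrite wfs; exact: le_trans hy' hyc.
    rewrite YE /vball.
    apply: (valtr hv _ x' a) => //.
    apply: (valtr hv _ a (a + s)%R).
      by rewrite (valsym hv) addrAC subrr add0r.
    exact: le_trans vts (le_trans (ltW lt_ss1) X1x).
  have NX1 : N X1.
    apply: (Nmax (fun X => N X \/ X = X1)); [by move=> X; left | | by right].
    split.
    - by move=> X [NX| ->]; [exact: Ng | exact: gX1].
    - move=> X Y [NX|->] [NY|->].
      + exact: Nn.
      + by right; exact: X1sub.
      + by left; exact: X1sub.
      + by left.
  have := Ha _ NX1; rewrite /X1 /vball.
  rewrite addrAC subrr add0r => h; have := lt_le_trans lt_ss1 h; rewrite ltxx.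
  by [].
case: (leP (w (y0 - f (a + s))%R) b0) => hdb.
- case: (eqVneq (y0 - f (a + s))%R 0%R) => d0.
  + exists (a + s)%R => Y MY.
    have fy : f (a + s)%R = y0 by apply/esym/subr0_eq.
    have b0t : b0 = \top.
      by apply/le_anti; rewrite lex1 /=; move: hdb; rewrite d0 w0.
    rewrite fy; case: (Mn Y Y0 MY MY0) => hY.
    * have [y [b [[e we] YE]]] := Mb Y MY.
      have Yy : Y y by rewrite YE /vball subrr w0; exact: lex1.
      have := hY y Yy; rewrite Y0E /vball b0t => h.
      have : w (y0 - y)%R = \top by apply/le_anti; rewrite lex1.
      by move/wtop/subr0_eq => ->.
    * exact: hY _ Y0y0.
  + have [s1 [Ss1 hs1]] := hc _ d0.
    have e : w (f s1) = w (y0 - f (a + s))%R by exact: valeq hs1.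
    by exfalso; apply: (key s1) => //; rewrite e.
- have e00 : e0 != 0%R.
    apply/eqP => e00; move: hdb; rewrite -we0 e00 w0 ltNge lex1.
    by [].
  have [s1 [Ss1 hs1]] := hc _ e00.
  have e : w (f s1) = b0 by rewrite -we0; exact: valeq hs1.
  by exfalso; apply: (key s1) => //; rewrite e // ltW.
Qed.

Theorem mainTheorem1 (A B : zmodType) (d1 d2 : Order.disp_t)
  (G1 : tOrderType d1) (G2 : tOrderType d2)
  (v : A -> G1) (w : B -> G2) (f : {additive A -> B}) (S : A -> Prop) :
  valuation v -> valuation w ->
  (forall s s' : A, S s -> S s' -> v s = v s' -> w (f s) = w (f s')) ->
  (forall s s' : A, S s -> S s' -> v s < v s' -> w (f s) < w (f s')) ->
  (forall a s : A, S s -> v s <= v a -> w (f s) <= w (f a)) ->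
  (forall b : B, b != 0%R -> exists s : A, S s /\ w b < w (b - f s)%R) ->
  spherically_complete v ->
  (forall b : B, exists a : A, f a = b) /\ spherically_complete w.
Proof.
move=> hv hw ha1 ha2 hb hc hsc.
have K := @key_lemma _ _ _ _ _ _ v w f S hv hw ha1 ha2 hb hc hsc.
split; last first.
  move=> M hM; have [a Ha] := K M hM; by exists (f a).
move=> b.
have [a Ha] : exists a, forall Y, Y = vball w \top b -> Y (f a).
  apply: K.
  split.
  - move=> X ->; exists b, \top; split => //; exists 0%R; exact: val_top hw.
  - by move=> X Y -> ->; left.
exists a.
have := Ha _ erefl; rewrite /vball => h.
have : w (b - f a)%R = \top by apply/le_anti; rewrite lex1.
by case: (hw) => _ hh _ /hh /subr0_eq ->.
Qed.
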